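(* Let $N\ge 3$, let $a>0$, $b>0$, and let $g:\mathbb{R}\to\mathbb{R}$ be continuous. A function $u\in C^2(\mathbb{R}^N)\cap\mathcal{D}^{1,2}(\mathbb{R}^N)$ is a solution of $$-\Big(a+b\int_{\mathbb{R}^N}|\nabla u|^2\Big)\Delta u=g(u)\quad\text{in }\mathbb{R}^N$$ if and only if there exist $v\in C^2(\mathbb{R}^N)\cap\mathcal{D}^{1,2}(\mathbb{R}^N)$ solving $$-\Delta v=g(v)\quad\text{in }\mathbb{R}^N$$ and $t>0$ such that $t^2a+t^{4-N}b\int_{\mathbb{R}^N}|\nabla v|^2=1$ and $u(x)=v(tx)$ for all $x\in\mathbb{R}^N$.
   Context: $\mathcal{D}^{1,2}(\mathbb{R}^N)$ denotes the completion of $C_c^\infty(\mathbb{R}^N)$ with respect to the norm $\left(\int_{\mathbb{R}^N}|\nabla u|^2\right)^{1/2}$. Solutions are understood in the classical (pointwise) sense. *)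

(* Defs.v *)
From HB Require Import structures.
From mathcomp Require Import all_boot all_order all_algebra.
From mathcomp Require Import all_classical all_reals all_analysis.

Set Implicit Arguments.
Unset Strict Implicit.
Unset Printing Implicit Defensive.

Import Order.TTheory GRing.Theory Num.Theory.
Import numFieldNormedType.Exports.

Local Open Scope classical_set_scope.
Local Open Scope ring_scope.

(* Points of R^N are row vectors 'rV[R]_N (normed with the max norm, which
   induces the usual topology; only the topology matters below). *)

Definition ebasis {R : realType} (N : nat) (i : 'I_N) : 'rV[R]_N := delta_mx 0 i.

Definition partial {R : realType} (N : nat) (i : 'I_N) (f : 'rV[R]_N -> R)
  : 'rV[R]_N -> R := fun x => 'D_(ebasis i) f x.

Fixpoint dpart {R : realType} (N : nat) (s : seq 'I_N) (f : 'rV[R]_N -> R)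
  : 'rV[R]_N -> R :=
  match s with
  | [::] => f
  | i :: s' => partial i (dpart s' f)
  end.

Definition C2 {R : realType} (N : nat) (u : 'rV[R]_N -> R) : Prop :=
  continuous u /\
  (forall i x, derivable u x (ebasis i)) /\
  (forall i, continuous (partial i u)) /\
  (forall i j x, derivable (partial i u) x (ebasis j)) /\
  (forall i j, continuous (partial j (partial i u))).

Definition smooth {R : realType} (N : nat) (u : 'rV[R]_N -> R) : Prop :=
  forall s : seq 'I_N,
    continuous (dpart s u) /\ forall i x, derivable (dpart s u) x (ebasis i).

Definition Cc_infty {R : realType} (N : nat) (u : 'rV[R]_N -> R) : Prop :=
  smooth u /\ exists r : R, forall x, r < `|x| -> u x = 0.

Definition laplacian {R : realType} (N : nat) (u : 'rV[R]_N -> R) : 'rV[R]_N -> R :=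
  fun x => \sum_(i < N) partial i (partial i u) x.

Definition grad_sq {R : realType} (N : nat) (u : 'rV[R]_N -> R) : 'rV[R]_N -> R :=
  fun x => \sum_(i < N) (partial i u x) ^+ 2.

(* Lebesgue integral over R^N of a nonnegative function, computed as an
   iterated integral of one-dimensional Lebesgue integrals (Tonelli). *)
Fixpoint iint {R : realType} (n : nat) : ('rV[R]_n -> \bar R) -> \bar R :=
  match n with
  | 0 => fun f => f 0
  | n'.+1 => fun f =>
      (\int[@lebesgue_measure R]_(x in [set: R])
          iint (fun y : 'rV[R]_n' => f (row_mx (const_mx x : 'rV[R]_1) y)))%E
  end.

Definition dirichlet {R : realType} (N : nat) (u : 'rV[R]_N -> R) : \bar R :=
  iint (fun x => (grad_sq u x)%:E).

(* u belongs to D^{1,2}(R^N), the completion of C_c^infty(R^N) for the norm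
   (\int |grad .|^2)^{1/2}: u is the limit of a sequence of test functions
   phi_k, with grad phi_k -> grad u in L^2 and phi_k -> u pointwise. *)
Definition D12 {R : realType} (N : nat) (u : 'rV[R]_N -> R) : Prop :=
  exists phi : nat -> 'rV[R]_N -> R,
    (forall k, Cc_infty (phi k)) /\
    (forall x, (fun k => phi k x) @ \oo --> u x) /\
    ((fun k => dirichlet (fun x => phi k x - u x)) @ \oo --> 0%E).

Definition kirchhoff_sol {R : realType} (N : nat) (a b : R) (g : R -> R)
  (u : 'rV[R]_N -> R) : Prop :=
  forall x, - (a + b * fine (dirichlet u)) * laplacian u x = g (u x).

Definition local_sol {R : realType} (N : nat) (g : R -> R)
  (v : 'rV[R]_N -> R) : Prop :=
  forall x, - laplacian v x = g (v x).

(* Main.v *)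
Require Import Defs.
From HB Require Import structures.
From mathcomp Require Import all_boot all_order all_algebra.
From mathcomp Require Import all_classical all_reals all_analysis.
From mathcomp Require Import measurable_realfun.
From mathcomp Require Import ring lra.

Import Order.TTheory GRing.Theory Num.Theory.
Import numFieldNormedType.Exports.
Local Open Scope ring_scope.

Set Implicit Arguments.
Unset Strict Implicit.
Unset Printing Implicit Defensive.

Section SA.
Local Open Scope classical_set_scope.
Local Open Scope ring_scope.

Variable R : realType.

Lemma mscal (c : R) : measurable_fun setT (fun x : R => x * c).
Proof. exact: measurable_realfun.mulrr_measurable. Qed.

Lemma pre_scale_itv (c a b : R) : 0 < c ->
  (fun x : R => x * c) @^-1` [set` `]a, b]] = [set` `]a / c, b / c]].
Proof.
move=> c0; apply/seteqP; split => x /=; rewrite !in_itv /=.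
  by move=> /andP[h1 h2]; rewrite ltr_pdivrMr // ler_pdivlMr // h1 h2.
by rewrite ltr_pdivrMr // ler_pdivlMr //.
Qed.

Lemma push_scale (c : R) (c0 : 0 < c) A : measurable A ->
  lebesgue_measure ((fun x : R => x * c) @^-1` A) = ((c^-1)%:E * lebesgue_measure A)%E.
Proof.
move=> mA.
have mc : @measurable_fun _ _ (measurableTypeR R) (measurableTypeR R) setT (fun x : R => x * c) := mscal c.
pose P := measure_function_pushforward__canonical__measure_function_Measure (@lebesgue_measure R) mc.
pose mu : measure _ R := mscale (NngNum (ltW c0)) P.
have H := @lebesgue_measure_unique R mu.
have -> : lebesgue_measure A = mu A.
  apply: H => // _ [[a b] _ <-] /=.
  rewrite /mu /mscale /= /pushforward pre_scale_itv // !lebesgue_measure_itv /=.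
  rewrite !lte_fin ltr_pdivrMr // divfK ?gt_eqF //.
  case: ifP => _; last by rewrite mule0.
  by rewrite -EFinD -EFinM mulrBr !(mulrC c) !divfK ?gt_eqF.
rewrite /mu /mscale /= /pushforward muleA -EFinM mulVf ?gt_eqF // mul1e.
by [].
Qed.

Lemma cov_meas (c : R) (c0 : 0 < c) (f : R -> \bar R) :
  measurable_fun setT f -> (forall x, (0 <= f x)%E) ->
  (\int[lebesgue_measure]_(x in setT) f (x * c)%R =
   (c^-1)%:E * \int[lebesgue_measure]_(x in setT) f x)%E.
Proof.
move=> mf f0.
have mc : @measurable_fun _ _ (measurableTypeR R) (measurableTypeR R) setT (fun x : R => x * c) := mscal c.
have := @ge0_integral_pushforward _ _ _ _ R _ mc (@lebesgue_measure R) setT f measurableT mf (fun y _ => f0 y).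
rewrite preimage_setT /= => <-.
have ci0 : 0 <= c^-1 by rewrite invr_ge0 ltW.
transitivity (\int[mscale (NngNum ci0) (@lebesgue_measure R)]_x f x)%E; last first.
  by rewrite ge0_integral_mscale.
apply: eq_measure_integral => A mA _ /=.
by rewrite /mscale /pushforward /= push_scale.
Qed.

Local Open Scope ereal_scope.
Import HBNNSimple.

Lemma int_mono (F G : R -> \bar R) : (forall x, 0 <= F x) -> (forall x, F x <= G x) ->
  \int[lebesgue_measure]_(x in setT) F x <= \int[lebesgue_measure]_(x in setT) G x.
Proof.
move=> F0 FG; rewrite !ge0_integralTE //; last by move=> x; exact: le_trans (F0 x) (FG x).
apply: ereal_sup_le => _ [h hF <-]; exists h => //= x.
exact: le_trans (hF x) (FG x).
Qed.

Lemma L1_le (G : R -> \bar R) (k c : R) : (forall x, 0 <= G x) -> (0 < k)%R -> (0 < c)%R ->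
  \int[lebesgue_measure]_(x in setT) (k%:E * G (x * c)%R) <=
  (k / c)%:E * \int[lebesgue_measure]_(x in setT) G x.
Proof.
move=> G0 k0 c0.
rewrite ge0_integralTE; last by move=> x; rewrite mule_ge0 // lee_fin ltW.
apply: ge_ereal_sup => _ [h /= hle <-].
rewrite -integralT_nnsfun.
pose f := fun x : R => ((k^-1 * h (x / c)%R)%R)%:E.
have mf : measurable_fun setT f.
  apply/measurable_EFinP; apply: measurable_funM => //.
  have mh : measurable_fun [set: R] (h : R -> R) by exact (measurable_funP h).
  exact (measurableT_comp mh (measurable_realfun.mulrr_measurable (c^-1)%R)).
have f0 : forall x, 0 <= f x.
  by move=> x; rewrite lee_fin mulr_ge0 // invr_ge0 ltW.
have -> : \int[lebesgue_measure]_x (h x)%:E = \int[lebesgue_measure]_x (k%:E * f (x * c)%R).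
  apply: eq_integral => x _; rewrite /f -EFinM mulrA mulfV ?gt_eqF // mul1r mulfK ?gt_eqF //.
rewrite ge0_integralZl //; last first.
  - by rewrite lee_fin ltW.
  - exact: (measurableT_comp mf (measurable_realfun.mulrr_measurable c)).
rewrite cov_meas // muleA -EFinM.
rewrite lee_pmul2l ?fin_numE ?lte_fin ?divr_gt0 //.
apply: int_mono => // x.
have := hle (x / c)%R; rewrite divfK ?gt_eqF // /f => H.
rewrite -(@lee_pmul2l _ k%:E) ?fin_numE ?lte_fin // EFinM muleA -EFinM mulfV ?gt_eqF //.
by rewrite mul1r.
Qed.

Lemma L1 (G : R -> \bar R) (k c : R) : (forall x, 0 <= G x) -> (0 < k)%R -> (0 < c)%R ->
  \int[lebesgue_measure]_(x in setT) (k%:E * G (x * c)%R) =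
  (k / c)%:E * \int[lebesgue_measure]_(x in setT) G x.
Proof.
move=> G0 k0 c0.
apply/eqP; rewrite eq_le L1_le //=.
have G'0 : forall x, 0 <= k%:E * G (x * c)%R by move=> x; rewrite mule_ge0 // lee_fin ltW.
have ki0 : (0 < k^-1)%R by rewrite invr_gt0.
have ci0 : (0 < c^-1)%R by rewrite invr_gt0.
have := L1_le G'0 ki0 ci0.
have -> : \int[lebesgue_measure]_x ((k^-1)%R%:E * (k%:E * G ((x * c^-1) * c)%R)) =
          \int[lebesgue_measure]_x G x.
  apply: eq_integral => x _; rewrite muleA -EFinM mulVf ?gt_eqF // mul1e divfK ?gt_eqF //.
move=> H.
rewrite -(@lee_pmul2l _ (c / k)%:E) ?fin_numE ?lte_fin ?divr_gt0 //.
rewrite muleA -EFinM mulrA divfK ?gt_eqF // mulfV ?gt_eqF // mul1e.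
rewrite (le_trans H) //.
by rewrite invrK mulrC.
Qed.

Lemma iint_ge0 n (F : 'rV[R]_n -> \bar R) : (forall x, 0 <= F x) -> 0 <= iint F.
Proof.
elim: n F => [|n IH] F F0 /=; first exact: F0.
by apply: integral_ge0 => x _; apply: IH.
Qed.

Lemma scale_row_const n (c x : R) (y : 'rV[R]_n) :
  (c *: row_mx (const_mx x : 'rV[R]_1) y = row_mx (const_mx (x * c)%R) (c *: y))%R.
Proof.
by rewrite scale_row_mx; congr row_mx; apply/matrixP => i j; rewrite !mxE mulrC.
Qed.

Lemma iint_scale n (F : 'rV[R]_n -> \bar R) (k c : R) : (forall x, 0 <= F x) ->
  (0 < k)%R -> (0 < c)%R ->
  iint (fun x => k%:E * F (c *: x)%R) = (k * (c^-1) ^+ n)%:E * iint F.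
Proof.
elim: n F k => [|n IH] F k F0 k0 c0 /=.
  by rewrite scaler0 expr0 mulr1.
have -> : (fun x : R => iint (fun y : 'rV[R]_n =>
            k%:E * F (c *: row_mx (const_mx x : 'rV[R]_1) y)%R)) =
          (fun x : R => (k * (c^-1) ^+ n)%:E *
            iint (fun y : 'rV[R]_n => F (row_mx (const_mx (x * c)%R : 'rV[R]_1) y))).
  apply/funext => x.
  rewrite -IH //; congr iint; apply/funext => y.
  by rewrite scale_row_const.
rewrite (@L1 (fun x : R => iint (fun y : 'rV[R]_n => F (row_mx (const_mx x : 'rV[R]_1) y)))) //.
- by rewrite exprSr mulrA.
- by move=> x; apply: iint_ge0.
- by rewrite mulr_gt0 // exprn_gt0 // invr_gt0.
Qed.

End SA.

Section SB.
Local Open Scope classical_set_scope.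
Local Open Scope ring_scope.

Variable R : realType.

Lemma dsc (s : R) : s != 0 -> (fun h : R => h * s) @ (0 : R)^' --> (0 : R)^'.
Proof.
move=> s0 P /= [e /= e0 HP].
exists (e / `|s|) => [/=|y /= Hy y0]; first by rewrite divr_gt0 // normr_gt0.
apply: HP; last by rewrite mulf_neq0.
move: Hy; rewrite /ball /= !sub0r !normrN normrM ltr_pdivlMr ?normr_gt0 //.
Qed.

Lemma derive_sc N (f : 'rV[R]_N -> R) (s : R) (x v : 'rV[R]_N) : s != 0 ->
  derivable f (s *: x) v ->
  derivable (fun y => f (s *: y)) x v /\
  'D_v (fun y => f (s *: y)) x = s * 'D_v f (s *: x).
Proof.
move=> s0 df.
set q := fun h : R => h^-1 *: ((f \o shift (s *: x)) (h *: v) - f (s *: x)).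
have E : (fun h : R => h^-1 *: (((fun y => f (s *: y)) \o shift x) (h *: v) - f (s *: x))) =
         (fun h : R => s *: q (h * s)).
  apply/funext => h; rewrite /q /= scalerA invfM.
  rewrite mulrCA mulfV // mulr1; congr (_ *: (f _ - _)).
  by rewrite scalerDr scalerA (mulrC s).
have cq : q @ (0 : R)^' --> 'D_v f (s *: x) by exact: df.
have cq' : (fun h : R => s *: q (h * s)) @ (0 : R)^' --> s *: 'D_v f (s *: x).
  apply: cvgZl_tmp; exact: (cvg_comp _ _ (dsc s0) cq).
split; first by apply/cvg_ex; exists (s *: 'D_v f (s *: x)); rewrite /derivable E.
by rewrite /derive E (cvg_lim _ cq').
Qed.

Variable N : nat.
Implicit Types (f g u : 'rV[R]_N -> R).

Lemma cont_sc g (k s : R) : continuous g -> continuous (fun y : 'rV[R]_N => k * g (s *: y)).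
Proof.
move=> cg x.
have h1 : {for x, continuous (fun y : 'rV[R]_N => g (s *: y))}.
  apply: (continuous_comp (f := fun y : 'rV[R]_N => s *: y)).
    exact: scaler_continuous.
  exact: cg.
exact (@continuousZl_tmp _ _ _ (fun y : 'rV[R]_N => g (s *: y)) k x h1).
Qed.

Lemma sc_deriv g (s : R) (e : 'rV[R]_N) : s != 0 -> (forall x, derivable g x e) ->
  (forall x, derivable (fun y => g (s *: y)) x e) /\
  'D_e (fun y => g (s *: y)) = (fun y => s * 'D_e g (s *: y)).
Proof.
move=> s0 dg; split; first by move=> x; case: (derive_sc s0 (dg (s *: x))).
by apply/funext => x; case: (derive_sc s0 (dg (s *: x))).
Qed.

Lemma scZ_deriv g (k s : R) (e : 'rV[R]_N) : s != 0 -> (forall x, derivable g x e) ->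
  (forall x, derivable (fun y => k * g (s *: y)) x e) /\
  'D_e (fun y => k * g (s *: y)) = (fun y => k * (s * 'D_e g (s *: y))).
Proof.
move=> s0 dg; have [d1 d2] := sc_deriv s0 dg.
have -> : (fun y => k * g (s *: y)) = k \*: (fun y => g (s *: y)) by [].
split; first by move=> x; apply: derivableZ.
apply/funext => x; rewrite deriveZ //; by case: (derive_sc s0 (dg (s *: x))) => _ ->.
Qed.

Lemma cont_sc1 g (s : R) : continuous g -> continuous (fun y : 'rV[R]_N => g (s *: y)).
Proof.
move=> cg; have := cont_sc (k:=1) (s:=s) cg.
by have -> : (fun y : 'rV[R]_N => 1 * g (s *: y)) = (fun y => g (s *: y)) by apply/funext => y; rewrite mul1r.
Qed.

Lemma partial_sc g (s : R) i : s != 0 -> (forall x, derivable g x (ebasis i)) ->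
  partial i (fun y => g (s *: y)) = (fun y => s * partial i g (s *: y)).
Proof. by move=> s0 dg; rewrite /partial (sc_deriv s0 dg).2. Qed.

Lemma partial_scZ g (k s : R) i : s != 0 -> (forall x, derivable g x (ebasis i)) ->
  partial i (fun y => k * g (s *: y)) = (fun y => k * (s * partial i g (s *: y))).
Proof. by move=> s0 dg; rewrite /partial (scZ_deriv k s0 dg).2. Qed.

Lemma C2_sc u (s : R) : s != 0 -> C2 u -> C2 (fun y => u (s *: y)).
Proof.
move=> s0 [cu [du [cpu [dpu cppu]]]].
split; first exact: cont_sc1.
split; first by move=> i x; exact: (sc_deriv s0 (du i)).1.
split; first by move=> i; rewrite partial_sc //; exact: cont_sc.
split; first by move=> i j x; rewrite partial_sc //; exact: (scZ_deriv s s0 (dpu i j)).1.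
move=> i j; rewrite partial_sc // partial_scZ //.
have -> : (fun y : 'rV[R]_N => s * (s * partial j (partial i u) (s *: y))) =
          (fun y => (s * s) * partial j (partial i u) (s *: y)) by apply/funext => y; rewrite mulrA.
exact: cont_sc.
Qed.

Lemma lap_sc u (s : R) x : s != 0 -> (forall i x, derivable u x (ebasis i)) ->
  (forall i j x, derivable (partial i u) x (ebasis j)) ->
  laplacian (fun y => u (s *: y)) x = s ^+ 2 * laplacian u (s *: x).
Proof.
move=> s0 du dpu; rewrite /laplacian mulr_sumr; apply: eq_bigr => i _.
by rewrite partial_sc // partial_scZ // mulrA expr2.
Qed.

Lemma grad_sc u (s : R) x : s != 0 -> (forall i x, derivable u x (ebasis i)) ->
  grad_sq (fun y => u (s *: y)) x = s ^+ 2 * grad_sq u (s *: x).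
Proof.
move=> s0 du; rewrite /grad_sq mulr_sumr; apply: eq_bigr => i _.
by rewrite partial_sc // exprMn.
Qed.

Lemma dpart_sc f (s : R) (l : seq 'I_N) : s != 0 -> smooth f ->
  dpart l (fun y => f (s *: y)) = (fun y => s ^+ size l * dpart l f (s *: y)).
Proof.
move=> s0 sf; elim: l => [|i l IH] /=.
  by apply/funext => y; rewrite expr0 mul1r.
rewrite IH partial_scZ //; last by move=> x; exact: ((sf l).2 i x).
by apply/funext => y; rewrite mulrA exprSr.
Qed.

Lemma smooth_sc f (s : R) : s != 0 -> smooth f -> smooth (fun y => f (s *: y)).
Proof.
move=> s0 sf l; rewrite dpart_sc //; split; first exact: cont_sc (sf l).1.
by move=> i x; exact: (scZ_deriv _ s0 (fun x => (sf l).2 i x)).1.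
Qed.

Lemma Cc_sc f (s : R) : 0 < s -> Cc_infty f -> Cc_infty (fun y => f (s *: y)).
Proof.
move=> s0 [sf [r Hr]]; split; first by apply: smooth_sc => //; rewrite gt_eqF.
exists (r / s) => x Hx; apply: Hr.
rewrite normrZ gtr0_norm //.
by rewrite mulrC -ltr_pdivrMr.
Qed.

End SB.

Section SC.
Local Open Scope classical_set_scope.
Local Open Scope ring_scope.
Variable R : realType.
Variable N : nat.
Implicit Types (u : 'rV[R]_N -> R).

Lemma dirichlet_sc u (s : R) : 0 < s -> (forall i x, derivable u x (ebasis i)) ->
  dirichlet (fun y => u (s *: y)) = ((s ^+ 2 * (s^-1) ^+ N)%:E * dirichlet u)%E.
Proof.
move=> s0 du; rewrite /dirichlet.
have -> : (fun x : 'rV[R]_N => (grad_sq (fun y => u (s *: y)) x)%:E) =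
          (fun x => ((s ^+ 2)%:E * (grad_sq u (s *: x))%:E)%E).
  by apply/funext => x; rewrite grad_sc ?gt_eqF // EFinM.
rewrite (iint_scale (F := fun x : 'rV[R]_N => (grad_sq u x)%:E)) //; last by rewrite exprn_gt0.
by move=> x; rewrite lee_fin /grad_sq sumr_ge0 // => i _; exact: sqr_ge0.
Qed.

Lemma fine_scale (r : R) (e : \bar R) : 0 < r -> fine (r%:E * e)%E = r * fine e.
Proof.
move=> r0; case: e => [x| |] /=; first by [].
- by rewrite gt0_muley ?lte_fin //= mulr0.
- by rewrite gt0_muleNy ?lte_fin //= mulr0.
Qed.

Lemma D12_sc u (s : R) : 0 < s -> (forall i x, derivable u x (ebasis i)) ->
  D12 u -> D12 (fun y => u (s *: y)).
Proof.
move=> s0 du [phi [Hc [Hp Hd]]].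
exists (fun k y => phi k (s *: y)); split; first by move=> k; exact: Cc_sc.
split; first by move=> x; exact: Hp.
have -> : (fun k => dirichlet (fun x => phi k (s *: x) - u (s *: x))) =
          (fun k => ((s ^+ 2 * (s^-1) ^+ N)%:E * dirichlet (fun x => (phi k x - u x)%R))%E).
  apply/funext => k; rewrite (@dirichlet_sc (fun x => phi k x - u x)) //.
  move=> i x; have [sm _] := Hc k.
  exact (@derivableB _ _ _ (phi k) u x (ebasis i) ((sm [::]).2 i x) (du i x)).
rewrite -[X in _ --> X](mule0 (s ^+ 2 * (s^-1) ^+ N)%:E).
by apply: cvgeZl.
Qed.
End SC.
Unset Implicit Arguments.

Theorem theorem1p1 (R : realType) (N : nat) (a b : R) (g : R -> R)
  (HN : (3 <= N)%N) (Ha : 0 < a) (Hb : 0 < b) (Hg : continuous g)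
  (u : 'rV[R]_N -> R) (Hu2 : C2 u) (HuD : D12 u) :
  kirchhoff_sol a b g u <->
  exists (v : 'rV[R]_N -> R) (t : R),
    [/\ C2 v, D12 v & local_sol g v] /\
    [/\ 0 < t,
        t ^+ 2 * a + t ^ (4 - (N : int)) * b * fine (dirichlet v) = 1
        & forall x, u x = v (t *: x)].
Proof.
have t2 : forall t : R, 0 < t -> t ^ (4 - (N : int)) = t ^+ 4 * (t^-1) ^+ N.
  move=> t t0; rewrite expfzDr ?gt_eqF // exprVn exprnN //.
have dge0 : forall w : 'rV[R]_N -> R, 0 <= fine (dirichlet w).
  move=> w; apply: fine_ge0; rewrite /dirichlet; apply: iint_ge0 => x.
  by rewrite lee_fin /grad_sq sumr_ge0 // => i _; exact: sqr_ge0.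
split.
- move=> Ku.
  set D := fine (dirichlet u).
  have D0 : 0 <= D := dge0 u.
  set c := a + b * D.
  have c0 : 0 < c by have := mulr_ge0 (ltW Hb) D0; rewrite /c; lra.
  set s := Num.sqrt c.
  have s0 : 0 < s by rewrite sqrtr_gt0.
  have ss : s ^+ 2 = c by rewrite sqr_sqrtr // ltW.
  have [_ [du [_ [dpu _]]]] := Hu2.
  exists (fun y => u (s *: y)), s^-1.
  split; first split.
  + by apply: C2_sc => //; rewrite gt_eqF.
  + exact: D12_sc.
  + by move=> y; rewrite lap_sc ?gt_eqF // ss -Ku /c mulNr.
  split.
  + by rewrite invr_gt0.
  + rewrite t2 ?invr_gt0 // invrK dirichlet_sc // fine_scale; last first.
      by rewrite mulr_gt0 // exprn_gt0 // invr_gt0.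
    rewrite -/D.
    have -> : (s^-1) ^+ 4 * s ^+ N * b * (s ^+ 2 * (s^-1) ^+ N * D) =
              (s^-1) ^+ 2 * b * D * ((s * s^-1) ^+ 2 * (s ^+ N * (s^-1) ^+ N)).
      by rewrite exprMn; ring.
    rewrite -exprMn mulfV ?gt_eqF // !expr1n !mulr1 exprVn ss.
    by rewrite -mulrA -mulrDr mulVf // gt_eqF.
  + by move=> x /=; rewrite scalerA mulfV ?gt_eqF // scale1r.
- case=> v [t [[C2v D12v Lv] [t0 Ht Huv]]].
  have Eu : u = (fun y => v (t *: y)) by apply/funext.
  have [_ [dv [_ [dpv _]]]] := C2v.
  rewrite Eu => x.
  rewrite lap_sc ?gt_eqF // dirichlet_sc // fine_scale; last first.
    by rewrite mulr_gt0 // exprn_gt0 // invr_gt0.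
  rewrite t2 // in Ht.
  rewrite -Lv.
  set X := laplacian v (t *: x).
  set Dv := fine (dirichlet v).
  have -> : - (a + b * (t ^+ 2 * t^-1 ^+ N * Dv)) * (t ^+ 2 * X) =
            - ((t ^+ 2 * a + t ^+ 4 * t^-1 ^+ N * b * Dv) * X) by ring.
  by rewrite Ht mul1r.
Qed.
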